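(* Let $\xi\in\mathcal N$. If $\xi\cap(x+Q_\sigma)\ne\emptyset$ for all $x\in\mathbb Z^d$ and all $\sigma\in\{-1,+1\}^d$, then $\xi\in\mathcal N_{\rm pol}$.
   Context: $\mathcal N$ is the set of locally finite subsets of $\mathbb R^d$. For $\xi\in\mathcal N$ and $x\in\xi$, $\mathrm{Vor}(x|\xi)=\{y\in\mathbb R^d:|y-x|\le|y-z|\ \forall z\in\xi\}$. $\mathcal N_{\rm pol}$ is the set of $\xi\in\mathcal N$ such that $\mathrm{Vor}(x|\xi)$ is a convex polytope (equivalently a bounded polyhedron, i.e. a bounded intersection of finitely many closed half-spaces) for every $x\in\xi$. For $\sigma\in\{-1,+1\}^d$, the open orthant is $Q_\sigma=\{x\in\mathbb R^d:\sigma_ix_i>0,\ 1\le i\le d\}$. *)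

(* Defs.v *)
From HB Require Import structures.
From mathcomp Require Import all_boot all_order all_algebra.
From mathcomp Require Import boolp classical_sets cardinality reals.
Set Implicit Arguments. Unset Strict Implicit. Unset Printing Implicit Defensive.
Import Order.TTheory GRing.Theory Num.Theory.
Local Open Scope ring_scope.
Local Open Scope classical_set_scope.

Definition pt (R : realType) (d : nat) := 'I_d -> R.

Definition enorm (R : realType) (d : nat) (y : pt R d) : R :=
  Num.sqrt (\sum_(i < d) y i ^+ 2).
Definition edist (R : realType) (d : nat) (y z : pt R d) : R :=
  enorm (fun i => y i - z i).

Definition bounded_set (R : realType) (d : nat) (S : set (pt R d)) : Prop :=
  exists M : R, forall y, S y -> enorm y <= M.

Definition locally_finite (R : realType) (d : nat) (xi : set (pt R d)) : Prop :=
  forall B : set (pt R d), bounded_set B -> finite_set (xi `&` B).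

Definition Vor (R : realType) (d : nat) (x : pt R d) (xi : set (pt R d))
  : set (pt R d) :=
  [set y | forall z, xi z -> edist y x <= edist y z].

Definition halfspace (R : realType) (d : nat) (a : pt R d) (b : R)
  : set (pt R d) :=
  [set y | \sum_(i < d) a i * y i <= b].

Definition polytope (R : realType) (d : nat) (P : set (pt R d)) : Prop :=
  bounded_set P /\
  exists (n : nat) (a : 'I_n -> pt R d) (b : 'I_n -> R),
    (forall k, a k <> (fun _ => 0)) /\
    P = [set y | forall k : 'I_n, halfspace (a k) (b k) y].

Definition N_pol (R : realType) (d : nat) (xi : set (pt R d)) : Prop :=
  locally_finite xi /\ forall x, xi x -> polytope (Vor x xi).

(* Open orthant Q_sigma, sigma in {-1,+1}^d encoded as booleans (true = +1). *)
Definition sgn_of (R : realType) (b : bool) : R := if b then 1 else -1.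
Definition orthant (R : realType) (d : nat) (sigma : 'I_d -> bool)
  : set (pt R d) :=
  [set y | forall i, 0 < sgn_of R (sigma i) * y i].

Definition translate (R : realType) (d : nat) (x : pt R d) (Q : set (pt R d))
  : set (pt R d) := [set y | Q (fun i => y i - x i)].

Definition int_pt (R : realType) (d : nat) (z : 'I_d -> int) : pt R d :=
  fun i => (z i)%:~R.

(* Main.v *)
Require Import Defs.
From mathcomp Require Import all_boot all_order all_algebra.
From mathcomp Require Import boolp classical_sets cardinality reals.
From mathcomp Require Import finmap.
From mathcomp Require Import ring lra.
Local Open Scope ring_scope.
Local Open Scope classical_set_scope.
Import Order.TTheory GRing.Theory Num.Theory.
Set Implicit Arguments. Unset Strict Implicit.

Section Aux.
Variables (R : realType) (d : nat).
Implicit Types (x y p w v : pt R d).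

Definition L1 v : R := \sum_(i < d) `|v i|.
Definition sq v : R := \sum_(i < d) v i ^+ 2.
Definition sub x y : pt R d := fun i => x i - y i.

Lemma L1_ge0 v : 0 <= L1 v.
Proof. by apply: sumr_ge0 => i _. Qed.

Lemma sq_ge0 v : 0 <= sq v.
Proof. by apply: sumr_ge0 => i _; rewrite sqr_ge0. Qed.

Lemma enorm_L1 y : enorm y <= L1 y.
Proof.
rewrite /enorm -[leRHS](@ger0_norm _ (L1 y)) ?L1_ge0 // -sqrtr_sqr ler_sqrt ?sqr_ge0 //.
rewrite expr2 mulr_sumr; apply: ler_sum => i _.
rewrite -real_normK ?num_real // expr2 ?normr_id. apply: ler_wpM2r => //.
by rewrite /L1 (bigD1 i) //= lerDl sumr_ge0.
Qed.

Lemma L1_tri y x : L1 y <= L1 (sub y x) + L1 x.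
Proof.
rewrite /L1 -big_split; apply: ler_sum => i _ /=; rewrite /sub.
by have := ler_normD (y i - x i) (x i); rewrite subrK.
Qed.

Lemma edist_le y x p : (edist y x <= edist y p) =
  (2 * \sum_(i < d) (y i - x i) * (p i - x i) <= sq (sub p x)).
Proof.
rewrite /edist /enorm ler_sqrt; last by apply: sumr_ge0 => i _; rewrite sqr_ge0.
have -> : \sum_(i < d) (y i - p i)^+2 = \sum_(i < d) (y i - x i)^+2
   - 2 * \sum_(i < d) (y i - x i) * (p i - x i) + sq (sub p x).
  rewrite /sq /sub mulr_sumr -sumrB -big_split /=; apply: eq_bigr => i _; ring.
by rewrite -addrA lerDl addrC subr_ge0.
Qed.

Lemma half_eq y x p : (2 * \sum_(i < d) (y i - x i) * (p i - x i) <= sq (sub p x)) =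
  (\sum_(i < d) (p i - x i) * y i <= (\sum_(i < d) (p i ^+ 2 - x i ^+ 2)) / 2).
Proof.
have e : sq (sub p x) - 2 * \sum_(i < d) (y i - x i) * (p i - x i) =
   \sum_(i < d) (p i ^+ 2 - x i ^+ 2) - 2 * \sum_(i < d) (p i - x i) * y i.
  rewrite /sq /sub !mulr_sumr -!sumrB; apply: eq_bigr => i _; ring.
rewrite -[in LHS]subr_ge0 e subr_ge0 ler_pdivlMr; last by [].
by rewrite [in RHS]mulrC.
Qed.

Lemma cs w : L1 w ^+ 2 <= d%:R * sq w.
Proof.
have e : forall i, `|w i| ^+ 2 = w i ^+ 2 := fun i => real_normK (num_real _).
suff h : 2 * L1 w ^+ 2 <= 2 * (d%:R * sq w).
  by rewrite ler_pM2l in h.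
have -> : 2 * (d%:R * sq w) = \sum_(i < d) \sum_(j < d) (`|w i|^+2 + `|w j|^+2).
  under eq_bigr do rewrite big_split /= sumr_const card_ord.
  have eS : \sum_(i < d) `|w i| ^+ 2 = sq w by apply: eq_bigr => i _; rewrite e.
  under eq_bigr do rewrite -mulr_natl.
  rewrite big_split /= -mulr_sumr eS sumr_const card_ord -mulr_natl; ring.
rewrite expr2 {1}/L1 mulr_suml mulr_sumr; apply: ler_sum => i _.
rewrite /L1 !mulr_sumr; apply: ler_sum => j _.
have := sqr_ge0 (`|w i| - `|w j|); rewrite sqrrB. lra.
Qed.
End Aux.

Theorem lemma2p3 (R : realType) (d : nat) (xi : set (pt R d)) :
  locally_finite xi ->
  (forall (z : 'I_d -> int) (sigma : 'I_d -> bool),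
      xi `&` translate (@int_pt R d z) (@orthant R d sigma) !=set0) ->
  N_pol xi.
Proof.
move=> lf hyp; split => // x xx.
pose z (s : 'I_d -> bool) : 'I_d -> int :=
  fun i => if s i then Num.ceil (x i) + 1 else Num.floor (x i) - 1.
have [P HP] := choice (fun s : 'I_d -> bool => hyp (z s) s).
have Pxi s : xi (P s) by case: (HP s).
have e1 : (1%:~R : R) = 1 by [].
have Pge s i : 1 <= sgn_of R (s i) * (P s i - x i).
  case: (HP s) => _ /(_ i); rewrite /int_pt /sgn_of /z; case: (s i) => /=.
    rewrite !mul1r intrD e1 => h; have := ceil_ge (x i); lra.
  rewrite !mulN1r intrB e1 => h; have := floor_le (x i); lra.
pose K := \sum_(s : {ffun 'I_d -> bool}) sq (sub (P s) x).
pose M := d%:R * K + \sum_(s : {ffun 'I_d -> bool}) L1 (sub (P s) x).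
have K0 : 0 <= K by apply: sumr_ge0 => s _; apply: sq_ge0.
have S0 : 0 <= \sum_(s : {ffun 'I_d -> bool}) L1 (sub (P s) x).
  by apply: sumr_ge0 => s _; apply: L1_ge0.
have MdK : d%:R * K <= M by rewrite /M lerDl.
have M0 : 0 <= M by rewrite /M addr_ge0 // mulr_ge0.
have key : forall y, (forall p, xi p -> p <> x -> L1 (sub p x) <= M ->
    edist y x <= edist y p) -> 2 * L1 (sub y x) <= K.
  move=> y Hy; pose s := [ffun i => 0 <= y i - x i].
  have h1 : edist y x <= edist y (P s).
    have [->|ne] := eqVneq (P s) x; first exact: le_refl.
    apply: Hy => //; first by apply/eqP.
    rewrite /M (bigD1 s) //= addrCA lerDl addr_ge0 ?mulr_ge0 //.
    by apply: sumr_ge0 => t _; apply: L1_ge0.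
  rewrite edist_le in h1; apply: le_trans (le_trans h1 _); last first.
    rewrite /K (bigD1 s) //= lerDl.
    by apply: sumr_ge0 => t _; apply: sq_ge0.
  rewrite ler_pM2l // /L1 /sub; apply: ler_sum => i _.
  have := Pge s i; rewrite /s ffunE /sgn_of.
  case: (lerP 0 (y i - x i)) => h /=.
    by rewrite mul1r ger0_norm // => h2; nra.
  by rewrite ltr0_norm // => h2; nra.
split.
  exists (K / 2 + L1 x) => y Vy.
  have := key y (fun p xp _ _ => Vy p xp).
  have := enorm_L1 y; have := L1_tri y x; lra.
pose B := [set p : pt R d | p <> x /\ L1 (sub p x) <= M].
have bB : bounded_set B.
  exists (M + L1 x) => p [_ Lp].
  have := enorm_L1 p; have := L1_tri p x; lra.
have /finite_fsetP [X eX] := lf B bB.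
pose sq0 := (X : seq (pt R d)).
have inX k : (k < size sq0)%N -> (xi `&` B) (nth x sq0 k).
  by move=> hk; rewrite eX /=; apply: mem_nth.
exists (size sq0), (fun k => sub (nth x sq0 k) x),
  (fun k => (\sum_(i < d) ((nth x sq0 k) i ^+ 2 - x i ^+ 2)) / 2).
split.
  move=> k ak0; have [_ [ne _]] := inX k (ltn_ord k).
  apply: ne; apply/funext => i.
  have := congr1 (fun f => f i) ak0; rewrite /sub /= => /eqP.
  by rewrite subr_eq0 => /eqP.
apply/seteqP; split => y /=.
  move=> Vy k; have [xk _] := inX k (ltn_ord k).
  by rewrite /halfspace /sub /= -half_eq -edist_le; apply: Vy.
move=> Hy.
have Hy' : forall p, xi p -> p <> x -> L1 (sub p x) <= M -> edist y x <= edist y p.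
  move=> p xp ne Lp.
  have ps : p \in sq0.
    have : (xi `&` B) p by [].
    by rewrite eX.
  have := Hy (Ordinal (etrans (index_mem p sq0) ps)).
  by rewrite /halfspace /= nth_index // edist_le half_eq.
have kb := key y Hy'.
move=> q xq; have [->|ne] := eqVneq q x; first exact: le_refl.
have [Lq|Lq] := leP (L1 (sub q x)) M; first by apply: Hy' => //; apply/eqP.
rewrite edist_le.
have h1 : \sum_(i < d) (y i - x i) * (q i - x i) <= L1 (sub y x) * L1 (sub q x).
  rewrite [X in _ <= _ * X]/L1 mulr_sumr; apply: ler_sum => i _.
  apply: le_trans (ler_norm _) _; rewrite normrM ler_wpM2r //.
  by rewrite /L1 /sub (bigD1 i) //= lerDl sumr_ge0.
have h2 := cs (sub q x).
have A0 := L1_ge0 (sub q x).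
have Q0 := sq_ge0 (sub q x).
have D0 : 0 <= (d%:R : R) by [].
set A := L1 (sub q x) in h1 h2 Lq A0.
set V := L1 (sub y x) in h1 kb.
set S := \sum_(i < d) (y i - x i) * (q i - x i) in h1 *.
set Q := sq (sub q x) in h2 Q0 *.
set D := (d%:R : R) in h2 D0 MdK.
have Apos : 0 < A by lra.
have p1 : M * A < A * A by rewrite ltr_pM2r.
have p2 : D * K * A <= M * A by rewrite ler_pM2r.
have p3a : 2 * S <= K * A.
  have : V * A <= K / 2 * A by rewrite ler_wpM2r //; lra.
  lra.
have p3 := ler_wpM2l D0 p3a.
rewrite -/S -/Q.
have p4 : D * (2 * S) < D * Q by lra.
rewrite leNgt; apply/negP => hq.
have := ler_wpM2l D0 (ltW hq); lra.
Qed.
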